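(* Let $\lambda$ be a non-uniform partition of $n$, and let $G\le\mathcal{S}_n$ be $\lambda$-homogeneous but not $\lambda$-transitive. Then $G$ is $2$-homogeneous, and hence primitive.
   Context: $\Omega=\{1,\ldots,n\}$. A partition of $n$ is a non-increasing sequence of positive integers with sum $n$; it is non-uniform if not all parts are equal. An ordered partition $(A_1,A_2,\ldots)$ of $\Omega$ has type $\lambda$ if $|A_i|=\lambda_i$. $G$ is $\lambda$-transitive if for any two ordered partitions $(A_i)$, $(B_i)$ of type $\lambda$ there is $g\in G$ with $A_ig=B_i$ for all $i$; $G$ is $\lambda$-homogeneous if for any two such ordered partitions there is $g\in G$ mapping the set of parts $\{A_1,A_2,\ldots\}$ onto $\{B_1,B_2,\ldots\}$. $G$ is $2$-homogeneous if it is transitive on $2$-subsets of $\Omega$. *)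

(* Defs.v *)
From mathcomp Require Import all_boot all_fingroup all_solvable.
Set Implicit Arguments. Unset Strict Implicit. Unset Printing Implicit Defensive.

(* Omega = {1..n} is modelled by 'I_n; permutations of Omega are {perm 'I_n}. *)

Definition is_partition (n : nat) (l : seq nat) : Prop :=
  [/\ sorted geq l, all (fun x => 0 < x) l & sumn l = n].

Definition non_uniform (l : seq nat) : Prop := ~~ constant l.

Definition ordpart_of_type (n : nat) (l : seq nat)
    (A : 'I_(size l) -> {set 'I_n}) : Prop :=
  [/\ forall i, #|A i| = nth 0 l i,
      forall i j, i != j -> [disjoint A i & A j]
    & \bigcup_(i < size l) A i = [set: 'I_n]].

Definition pimg (n : nat) (g : {perm 'I_n}) (X : {set 'I_n}) : {set 'I_n} :=
  [set g x | x in X].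

Definition lambda_transitive (n : nat) (l : seq nat) (G : {group {perm 'I_n}}) : Prop :=
  forall A B : 'I_(size l) -> {set 'I_n},
    ordpart_of_type A -> ordpart_of_type B ->
    exists2 g, g \in G & forall i, pimg g (A i) = B i.

Definition lambda_homogeneous (n : nat) (l : seq nat) (G : {group {perm 'I_n}}) : Prop :=
  forall A B : 'I_(size l) -> {set 'I_n},
    ordpart_of_type A -> ordpart_of_type B ->
    exists2 g, g \in G &
      [set pimg g (A i) | i : 'I_(size l)] = [set B i | i : 'I_(size l)].

Definition two_homogeneous (n : nat) (G : {group {perm 'I_n}}) : Prop :=
  forall S T : {set 'I_n}, #|S| = 2 -> #|T| = 2 ->
    exists2 g, g \in G & pimg g S = T.

(* Main.v *)
Require Import Defs.
From mathcomp Require Import all_boot all_fingroup all_solvable.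
From mathcomp Require Import all_order all_algebra zify.
From Stdlib Require Import Classical.
Set Implicit Arguments. Unset Strict Implicit. Unset Printing Implicit Defensive.

Lemma arith1 (a1 a2 b1 b2 c1 c2 d1 d2 d3 d4 : nat) :
  a1 + b1 = a2 + b2 -> c1 + b1 = c2 + b2 ->
  c1 + d1 = a1 + d2 -> c2 + d3 = a2 + d4 -> d1 + d4 = d3 + d2.
Proof. lia. Qed.

Lemma arith2 (a1 a2 b1 b2 ca cb : nat) (X Y : bool) :
  ca != cb -> a1 + b1 = a2 + b2 -> a1 + ca * Y = a2 + ca * X ->
  b2 + cb * Y = b1 + cb * X -> X = Y.
Proof. case: X; case: Y => //= /eqP; rewrite ?muln0 ?muln1; lia. Qed.

Section Aux.
Variable n : nat.
Implicit Types (g h : {perm 'I_n}) (X Y : {set 'I_n}).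

Lemma pimgM g h X : pimg (g * h) X = pimg h (pimg g X).
Proof. by rewrite /pimg -imset_comp; apply: eq_imset => x; rewrite permM. Qed.
Lemma pimg1 X : pimg 1 X = X.
Proof. by rewrite /pimg -[RHS]imset_id; apply: eq_imset => x; rewrite perm1. Qed.
Lemma pimgK g X : pimg g^-1 (pimg g X) = X.
Proof. by rewrite -pimgM mulgV pimg1. Qed.
Lemma pimgKV g X : pimg g (pimg g^-1 X) = X.
Proof. by rewrite -pimgM mulVg pimg1. Qed.
Lemma pimg_inj g : injective (pimg g).
Proof. exact: can_inj (pimgK g). Qed.
Lemma card_pimg g X : #|pimg g X| = #|X|.
Proof. exact: card_imset (@perm_inj _ g). Qed.
Lemma mem_pimg g X x : (g x \in pimg g X) = (x \in X).
Proof. exact: mem_imset (@perm_inj _ g). Qed.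
Lemma pimg2 g u v : pimg g [set u; v] = [set g u; g v].
Proof. by rewrite /pimg imsetU1 imset_set1. Qed.
Lemma pimgT g : pimg g setT = setT.
Proof.
apply/setP => x; rewrite inE; apply/imsetP; exists ((g^-1)%g x); first by [].
by rewrite permKV.
Qed.
Lemma pimgI g X Y : pimg g (X :&: Y) = pimg g X :&: pimg g Y.
Proof. by rewrite /pimg imsetI //; move=> x y _ _; apply: perm_inj. Qed.
Lemma pimg0 g : pimg g set0 = set0.
Proof. exact: imset0. Qed.

Lemma ordpart_pimg (l : seq nat) (A : 'I_(size l) -> {set 'I_n}) g :
  ordpart_of_type A -> ordpart_of_type (fun k => pimg g (A k)).
Proof.
case=> Hc Hd Hu; split.
- by move=> i; rewrite card_pimg Hc.
- move=> i j /Hd; rewrite -!setI_eq0 => /eqP H; by rewrite -pimgI H pimg0.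
- rewrite -(pimgT g) -Hu /pimg; apply/setP => x; apply/bigcupP/imsetP.
    by case=> i _ /imsetP [y Hy ->]; exists y => //; apply/bigcupP; exists i.
  by case=> y /bigcupP [i _ Hy] ->; exists i => //; apply: imset_f.
Qed.

Lemma perm_ext (s t : seq 'I_n) : uniq s -> uniq t -> size s = size t ->
  exists g : {perm 'I_n}, map g s = t.
Proof.
elim: s t => [|p s IH] [|x t] //=; first by move=> *; exists 1%g.
move=> /andP [ps us] /andP [xt ut] [st].
have [g Hg] := IH t us ut st.
exists (g * tperm (g p) x)%g; rewrite permM tpermL; congr (_ :: _).
rewrite -[RHS]Hg; apply/eq_in_map => u us'; rewrite permM tpermD //.
  by apply: contraNneq ps => /perm_inj ->.
by apply: contraNneq xt => ->; rewrite -Hg map_f.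
Qed.
Lemma pimgD1 g X x : pimg g (X :\ x) = pimg g X :\ g x.
Proof.
apply/setP => u; rewrite -[u](permKV g) mem_pimg !inE mem_pimg.
by rewrite (inj_eq perm_inj).
Qed.

Lemma pimg_out g X : (forall u, u \in X -> g u = u) -> pimg g X = X.
Proof.
move=> H; rewrite /pimg -[RHS]imset_id; apply: eq_in_imset => u /H.
by [].
Qed.

Lemma sum_tperm (F : 'I_n -> nat) X z w : z \in X -> w \notin X ->
  \sum_(u in pimg (tperm z w) X) F u + F z = \sum_(u in X) F u + F w.
Proof.
move=> zX wX; rewrite /pimg big_imset /=; last by move=> u v _ _; apply: perm_inj.
rewrite (big_setD1 z zX) [in RHS](big_setD1 z zX) /= tpermL.
rewrite (eq_bigr F); first by lia.
move=> u /setD1P [uz uX].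
have uw : u != w by apply: contraNneq wX => <-.
by rewrite tpermD // eq_sym.
Qed.
End Aux.

Section Main.
Variables (n : nat) (l : seq nat) (G : {group {perm 'I_n}}) (S0 : {set 'I_n}).
Hypothesis Hpos : all (fun x => 0 < x) l.
Hypothesis Hhom : lambda_homogeneous l G.

Definition inO X := [exists g in G, pimg g S0 == X].

Lemma inO_pimg h X : h \in G -> inO (pimg h X) = inO X.
Proof.
move=> Gh; apply/existsP/existsP => [[g /andP [Gg /eqP E]]|[g /andP [Gg /eqP E]]].
  exists (g * h^-1)%g; rewrite groupM ?groupV //= pimgM E pimgK //.
exists (g * h)%g; rewrite groupM //= pimgM E //.
Qed.

Definition fp u v : bool := (u != v) && inO [set u; v].

Lemma fp_sym u v : fp u v = fp v u.
Proof. by rewrite /fp eq_sym setUC. Qed.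

Lemma fp_pimg h u v : h \in G -> fp (h u) (h v) = fp u v.
Proof. by move=> Gh; rewrite /fp (inj_eq perm_inj) -pimg2 inO_pimg. Qed.

Definition e (X : {set 'I_n}) := \sum_(u in X) \sum_(v in X) (fp u v : nat).

Lemma e_pimg h X : h \in G -> e (pimg h X) = e X.
Proof.
move=> Gh; rewrite /e /pimg big_imset /=; last by move=> u v _ _; apply: perm_inj.
apply: eq_bigr => u _; rewrite big_imset /=; last by move=> a b _ _; apply: perm_inj.
by apply: eq_bigr => v _; rewrite fp_pimg.
Qed.

Lemma eU1 v (R : {set 'I_n}) : v \notin R -> e (v |: R) = e R + 2 * \sum_(u in R) (fp v u : nat).
Proof.
move=> vR; rewrite /e (big_setU1 _ vR) /= (big_setU1 _ vR) /= {1}/fp eqxx /=.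
have -> : \sum_(u in R) \sum_(w in v |: R) (fp u w : nat) =
    \sum_(u in R) ((fp v u : nat) + \sum_(w in R) (fp u w : nat)).
  by apply: eq_bigr => u _; rewrite big_setU1 //= fp_sym.
rewrite big_split /=; lia.
Qed.

Definition Fs (A : 'I_(size l) -> {set 'I_n}) := \sum_(i < size l) e (A i).

Lemma ordpart_inj (A : 'I_(size l) -> {set 'I_n}) : ordpart_of_type A -> injective A.
Proof.
case=> Hc Hd _ i j Eij; apply/eqP; apply: contraT => /Hd.
rewrite Eij -setI_eq0 setIid => /eqP A0.
have := Hc j; rewrite A0 cards0 => /esym H.
have := (all_nthP 0 Hpos) j (ltn_ord j); rewrite H //.
Qed.

Lemma Fs_inv A B : ordpart_of_type A -> ordpart_of_type B -> Fs A = Fs B.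
Proof.
move=> HA HB; have [g Gg Hg] := Hhom HA HB.
have HgA := ordpart_pimg g HA.
rewrite /Fs (eq_bigr (fun i => e (pimg g (A i)))); last by move=> i _; rewrite e_pimg.
have E1 := big_imset (fun X => e X) (in2W (ordpart_inj HgA)).
have E2 := big_imset (fun X => e X) (in2W (ordpart_inj HB)).
rewrite /= in E1 E2.
by rewrite -E1 Hg E2.
Qed.
Lemma K_lemma (A : 'I_(size l) -> {set 'I_n}) i j x y :
  ordpart_of_type A -> i != j -> x \in A i -> y \in A j ->
  \sum_(u in A i :\ x) (fp x u : nat) + \sum_(u in A j :\ y) (fp y u : nat) =
  \sum_(u in A i :\ x) (fp y u : nat) + \sum_(u in A j :\ y) (fp x u : nat).
Proof.
move=> HA ij xi yj; have [Hc Hd Hu] := HA.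
pose B := fun k => pimg (tperm x y) (A k).
have HB : ordpart_of_type B := ordpart_pimg _ HA.
have EF := Fs_inv HA HB.
have yi : y \notin A i by rewrite (disjointFl (Hd _ _ ij)).
have xj : x \notin A j by rewrite (disjointFr (Hd _ _ ij)).
have Bk : forall k, k != i -> k != j -> B k = A k.
  move=> k ki kj; apply: pimg_out => u uk; rewrite tpermD //.
    by apply/eqP => xu; move: xi; rewrite xu (disjointFr (Hd k i ki) uk).
  by apply/eqP => yu; move: yj; rewrite yu (disjointFr (Hd k j kj) uk).
have Bi : B i = y |: (A i :\ x).
  rewrite /B -{1}(setD1K xi) /pimg imsetU1 tpermL -/(pimg _ _) pimg_out //.
  move=> u /setD1P [ux ui]; have yu : y != u by apply/eqP => yu; rewrite yu ui in yi.
  by rewrite tpermD // eq_sym.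
have Bj : B j = x |: (A j :\ y).
  rewrite /B -{1}(setD1K yj) /pimg imsetU1 tpermR -/(pimg _ _) pimg_out //.
  move=> u /setD1P [uy uj]; have xu : x != u by apply/eqP => xu; rewrite xu uj in xj.
  by rewrite tpermD // eq_sym.
have eAi : e (A i) = e (A i :\ x) + 2 * \sum_(u in A i :\ x) (fp x u : nat).
  by rewrite -{1}(setD1K xi) eU1 // setD11.
have eAj : e (A j) = e (A j :\ y) + 2 * \sum_(u in A j :\ y) (fp y u : nat).
  by rewrite -{1}(setD1K yj) eU1 // setD11.
have eBi : e (B i) = e (A i :\ x) + 2 * \sum_(u in A i :\ x) (fp y u : nat).
  by rewrite Bi eU1 // inE negb_and negbK yi orbT.
have eBj : e (B j) = e (A j :\ y) + 2 * \sum_(u in A j :\ y) (fp x u : nat).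
  by rewrite Bj eU1 // inE negb_and negbK xj orbT.
move: EF; rewrite /Fs (bigD1 i) // [in RHS](bigD1 i) //=.
rewrite (bigD1 j) /=; last by rewrite eq_sym.
rewrite [in RHS](bigD1 j) /=; last by rewrite eq_sym.
rewrite (eq_bigr (fun k => e (B k))); last first.
  by move=> k /andP [ki kj]; rewrite Bk.
rewrite eAi eAj eBi eBj.
set s1 := \sum_(u in A i :\ x) (fp x u : nat).
set s2 := \sum_(u in A j :\ y) (fp y u : nat).
set s3 := \sum_(u in A i :\ x) (fp y u : nat).
set s4 := \sum_(u in A j :\ y) (fp x u : nat).
set M := \sum_(i0 < size l | _) _.
set a := e _; set b := e _; lia.
Qed.

Section Config.
Variables (A0 : 'I_(size l) -> {set 'I_n}) (i j k : 'I_(size l)) (p1 p2 q r : 'I_n).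
Hypotheses (HA0 : ordpart_of_type A0) (ij : i != j) (ik : i != k) (jk : j != k)
  (p1i : p1 \in A0 i) (p2i : p2 \in A0 i) (p12 : p1 != p2) (qj : q \in A0 j)
  (rk : r \in A0 k) (Hij : nth 0 l i != nth 0 l j).

Lemma uniq_p : uniq [:: p1; p2; q; r].
Proof.
have [_ Hd _] := HA0.
have dis : forall a b s t, s != t -> a \in A0 s -> b \in A0 t -> a != b.
  move=> a b s t st sa tb; apply/eqP => E; move: tb; rewrite -E.
  by rewrite (disjointFr (Hd _ _ st) sa).
rewrite /= !inE !negb_or p12 /=; repeat (apply/andP; split) => //; first [exact: (dis _ _ _ _ ij) | exact: (dis _ _ _ _ ik) | exact: (dis _ _ _ _ jk)].
Qed.

Lemma config x y z w : uniq [:: x; z; y; w] ->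
  exists A : 'I_(size l) -> {set 'I_n}, [/\ ordpart_of_type A, x \in A i, z \in A i, y \in A j & w \in A k].
Proof.
move=> U; have [g Hg] := perm_ext uniq_p U erefl.
case: Hg => Ex Ez Ey Ew.
exists (fun t => pimg g (A0 t)); split; first exact: ordpart_pimg.
- by rewrite -Ex mem_pimg.
- by rewrite -Ez mem_pimg.
- by rewrite -Ey mem_pimg.
by rewrite -Ew mem_pimg.
Qed.

Lemma Dlemma x y z w : uniq [:: x; z; y; w] ->
  (fp x z : nat) + fp y w = (fp y z : nat) + fp x w.
Proof.
move=> U; have [A [HA xi zi yj wk]] := config U.
have [_ Hd _] := HA.
move: U; rewrite /= !inE !negb_or => /andP [/and3P [xz xy xw] /andP [/andP [zy zw] /andP [yw _]]].
pose B := fun t => pimg (tperm z w) (A t).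
have HB : ordpart_of_type B := ordpart_pimg _ HA.
have tx : tperm z w x = x by rewrite tpermD // 1?eq_sym //.
have ty : tperm z w y = y by rewrite tpermD // 1?eq_sym //.
have xB : x \in B i by rewrite /B -{1}tx mem_pimg.
have yB : y \in B j by rewrite /B -{1}ty mem_pimg.
have KA := K_lemma HA ij xi yj.
have KB := K_lemma HB ij xB yB.
have Bi : B i :\ x = pimg (tperm z w) (A i :\ x) by rewrite pimgD1 tx.
have wi : w \notin A i :\ x by rewrite !inE (disjointFl (Hd _ _ ik) wk) andbF.
have zi' : z \in A i :\ x by rewrite !inE zi andbT eq_sym.
have Bj : B j :\ y = A j :\ y.
  congr (_ :\ _); apply: pimg_out => u uj; rewrite tpermD //.
    by apply/eqP => E; move: zi; rewrite E (disjointFl (Hd _ _ ij) uj).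
  have kj : k != j by rewrite eq_sym.
  by apply/eqP => E; move: wk; rewrite E (disjointFl (Hd _ _ kj) uj).
rewrite Bi Bj in KB.
have T1 := sum_tperm (fun u => (fp x u : nat)) zi' wi.
have T2 := sum_tperm (fun u => (fp y u : nat)) zi' wi.
move: KA KB T1 T2.
set a1 := \sum_(u in A i :\ x) (fp x u : nat).
set a2 := \sum_(u in A i :\ x) (fp y u : nat).
set b1 := \sum_(u in A j :\ y) (fp y u : nat).
set b2 := \sum_(u in A j :\ y) (fp x u : nat).
set c1 := \sum_(u in pimg _ _) (fp x u : nat).
set c2 := \sum_(u in pimg _ _) (fp y u : nat).
set d1 : nat := fp x z; set d2 : nat := fp x w; set d3 : nat := fp y z; set d4 : nat := fp y w.
clearbody a1 a2 b1 b2 c1 c2 d1 d2 d3 d4; exact: arith1.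
Qed.

Lemma n_gt3 : 3 < n.
Proof.
have := uniq_p; move/card_uniqP => /= H.
by rewrite -[n]card_ord -H max_card.
Qed.

Lemma fp_eq x y z : uniq [:: x; y; z] -> fp x z = fp y z.
Proof.
move=> U.
have /existsP [w Hw] : [exists w, w \notin [:: x; y; z]].
  apply: contraT; rewrite negb_exists => /forallP H.
  have : #|'I_n| <= 3.
    apply: leq_trans (card_size [:: x; y; z]).
    apply: subset_leq_card; apply/subsetP => u _; have := H u; by rewrite negbK.
  by rewrite card_ord leqNgt n_gt3.
move: U Hw; rewrite /= !inE !negb_or => /andP [/andP [xy xz] /andP [yz _]] /and3P [wx wy wz].
have U2 : uniq [:: x; z; y; w].
  by rewrite /= !inE !negb_or /=; repeat (apply/andP; split); rewrite // eq_sym.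
have [A [HA xi zi yj wk]] := config U2.
have [Hc Hd _] := HA.
have yi : y \notin A i by rewrite (disjointFl (Hd _ _ ij)).
have xj : x \notin A j by rewrite (disjointFr (Hd _ _ ij)).
have Hu : forall u, u != x -> u != y ->
    (fp x u : nat) + fp y z = (fp y u : nat) + fp x z.
  move=> u ux uy; have [->|uz] := eqVneq u z; first by rewrite addnC.
  apply: Dlemma; rewrite /= !inE !negb_or /=.
  by repeat (apply/andP; split); rewrite // eq_sym.
have S1 : \sum_(u in A i :\ x) (fp x u : nat) + #|A i :\ x| * fp y z =
          \sum_(u in A i :\ x) (fp y u : nat) + #|A i :\ x| * fp x z.
  rewrite -!sum_nat_const -!big_split; apply: eq_bigr => u /setD1P [ux ui].
  by apply: Hu => //; apply: contraNneq yi => <-.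
have S2 : \sum_(u in A j :\ y) (fp x u : nat) + #|A j :\ y| * fp y z =
          \sum_(u in A j :\ y) (fp y u : nat) + #|A j :\ y| * fp x z.
  rewrite -!sum_nat_const -!big_split; apply: eq_bigr => u /setD1P [uy uj].
  by apply: Hu => //; apply: contraNneq xj => <-.
have K := K_lemma HA ij xi yj.
have ci : #|A i| = (#|A i :\ x|).+1 by rewrite (cardsD1 x) xi.
have cj : #|A j| = (#|A j :\ y|).+1 by rewrite (cardsD1 y) yj.
have cne : #|A i :\ x| != #|A j :\ y|.
  by apply: contra Hij => /eqP E; rewrite -!Hc ci cj E.
exact: (arith2 cne K S1 S2).
Qed.

Lemma fpc a b c : a != b -> c != b -> fp a b = fp c b.
Proof.
move=> ab cb; have [->//|ac] := eqVneq a c.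
by apply: fp_eq; rewrite /= !inE !negb_or ac ab cb.
Qed.

Lemma fp_all a b c d : a != b -> c != d -> fp a b = fp c d.
Proof.
move=> ab cd; have [cbE|cb] := eqVneq c b.
  rewrite cbE in cd *; have db : d != b by rewrite eq_sym.
  by rewrite (fpc ab db) fp_sym.
have bc : b != c by rewrite eq_sym.
have dc : d != c by rewrite eq_sym.
by rewrite (fpc ab cb) [fp c b]fp_sym (fpc bc dc) fp_sym.
Qed.

Lemma homog2 (T : {set 'I_n}) : #|S0| = 2 -> #|T| = 2 -> exists2 g, g \in G & pimg g S0 = T.
Proof.
move=> /eqP /cards2P [s [t [st ES]]] /eqP /cards2P [u [v [uv ET]]].
have Hs : fp s t.
  rewrite /fp st /=; apply/existsP; exists 1%g; rewrite group1 /= pimg1 ES //.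
have : fp u v by rewrite (fp_all uv st).
by case/andP => _ /existsP [g /andP [Gg /eqP E]]; exists g; rewrite // ET.
Qed.
End Config.
End Main.
Lemma third_pt n (x y : 'I_n) : 2 < n -> exists z : 'I_n, (z != x) && (z != y).
Proof.
move=> n2; have /existsP [z Hz] : [exists z : 'I_n, z \notin [:: x; y]].
  apply: contraT; rewrite negb_exists => /forallP H.
  have : #|'I_n| <= 2.
    apply: leq_trans (card_size [:: x; y]).
    apply: subset_leq_card; apply/subsetP => u _; have := H u; by rewrite negbK.
  by rewrite card_ord leqNgt n2.
by exists z; move: Hz; rewrite !inE negb_or.
Qed.

Lemma homog_prim n (G : {group {perm 'I_n}}) : 2 < n -> two_homogeneous G ->
  [primitive G, on [set: 'I_n] | 'P].
Proof.
move=> n2 H2.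
have trans : forall x y : 'I_n, exists2 g, g \in G & g x = y.
  move=> x y; have [->|xy] := eqVneq x y; first by exists 1%g; rewrite ?group1 ?perm1.
  have [z /andP [zx zy]] := third_pt x y n2.
  have c1 : #|[set x; z]| = 2 by rewrite cards2 eq_sym zx.
  have c2 : #|[set y; z]| = 2 by rewrite cards2 eq_sym zy.
  have [g Gg E] := H2 [set x; z] [set y; z] c1 c2.
  have gx : g x \in [set y; z] by rewrite -E /pimg imset_f // !inE eqxx.
  have gz : g z \in [set y; z] by rewrite -E /pimg imset_f // !inE eqxx orbT.
  move: gx; rewrite !inE => /orP [/eqP gx|/eqP gx]; first by exists g.
  move: gz; rewrite !inE => /orP [/eqP gz|/eqP gz].
    by exists (g * g)%g; rewrite ?groupM // permM gx gz.
  have : g z = g x by rewrite gz gx.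
  by move/perm_inj => E'; rewrite E' eqxx in zx.
apply/andP; split.
  have x0 : 'I_n := Ordinal (leq_trans (isT : 0 < 3) n2).
  apply/imsetP; exists x0 => //; apply/setP => y; rewrite inE; apply/esym.
  have [g Gg E] := trans x0 y; apply/imsetP; exists g => //.
apply/existsP => [[Q /and3P [/and3P [/eqP cov tI s0] acts /andP [Q1 Qn]]]].
have [X XQ X2] : exists2 X, X \in Q & 1 < #|X|.
  apply/exists_inP; apply: contraLR Qn; rewrite negb_exists_in => /forall_inP Hs.
  rewrite -leqNgt (card_partition (_ : partition Q [set: 'I_n])); last first.
    by rewrite /partition cov eqxx tI s0.
  rewrite -[#|Q|]sum1_card; apply: leq_sum => B BQ; move: (Hs B BQ); by rewrite -leqNgt.
have [Y YQ YX] : exists2 Y, Y \in Q & Y != X.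
  have : 0 < #|Q :\ X| by rewrite (cardsD1 X) XQ /= in Q1.
  by case/card_gt0P => Y /setD1P [YX YQ]; exists Y.
have [w wY] : exists w, w \in Y.
  by apply/card_gt0P; rewrite card_gt0; apply: contraNneq s0 => <-.
have [u [v [uX vX uv]]] := card_gt1P X2.
have c1 : #|[set u; v]| = 2 by rewrite cards2 uv.
have c2 : #|[set u; w]| = 2.
  rewrite cards2; case: eqVneq => // uw; subst w.
  by move: YX; rewrite -(def_pblock tI YQ wY) (def_pblock tI XQ uX) eqxx.
have [g Gg E] := H2 [set u; v] [set u; w] c1 c2.
have gXQ : pimg g X \in Q.
  have := (actsP acts) g Gg X; rewrite XQ => H; apply: etrans H.
  by congr (_ \in _); rewrite /= /setact /pimg; apply: eq_imset => b; rewrite apermE.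
have uG : u \in pimg g X.
  have : u \in pimg g [set u; v] by rewrite E !inE eqxx.
  case/imsetP => b; rewrite !inE => /orP [/eqP ->|/eqP ->] ->; by rewrite /pimg imset_f.
have wG : w \in pimg g X.
  have : w \in pimg g [set u; v] by rewrite E !inE eqxx orbT.
  case/imsetP => b; rewrite !inE => /orP [/eqP ->|/eqP ->] ->; by rewrite /pimg imset_f.
move: YX; rewrite -(def_pblock tI YQ wY) (def_pblock tI gXQ wG).
by rewrite -(def_pblock tI gXQ uG) (def_pblock tI XQ uX) eqxx.
Qed.

Lemma uniq_trans n (l : seq nat) (G : {group {perm 'I_n}}) :
  uniq l -> lambda_homogeneous l G -> lambda_transitive l G.
Proof.
move=> U Hh A B HA HB; have [g Gg Hg] := Hh A B HA HB; exists g => // i.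
have : pimg g (A i) \in [set B t | t : 'I_(size l)] by rewrite -Hg; apply/imsetP; exists i.
case/imsetP => t _ E.
have [HcA _ _] := HA; have [HcB _ _] := HB.
have : nth 0 l i = nth 0 l t by rewrite -HcA -HcB -E card_pimg.
move/eqP; rewrite nth_uniq // => /eqP Eit.
by rewrite E; congr (B _); apply: val_inj.
Qed.

Lemma small_l (s : seq nat) : size s <= 2 -> ~~ constant s -> uniq s.
Proof. by case: s => [|a [|b [|c t]]] //= _; rewrite !inE !andbT eq_sym. Qed.

Lemma exists_ij (s : seq nat) : ~~ constant s ->
  exists i j, [/\ i < size s, j < size s & nth 0 s i != nth 0 s j].
Proof.
case: s => [|a t] //= /allPn [x xt xa].
have [m mt Em] := (nthP 0) xt.
by exists 0, m.+1; rewrite /= Em eq_sym.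
Qed.


Theorem lemma4p2 (n : nat) (l : seq nat) (G : {group {perm 'I_n}}) :
  is_partition n l -> non_uniform l ->
  lambda_homogeneous l G -> ~ lambda_transitive l G ->
  two_homogeneous G /\ [primitive G, on [set: 'I_n] | 'P].
Proof.
move=> [_ Hpos _] Hnu Hhom Hnt.
have [[A0 HA0]|Hno] := classic (exists A : 'I_(size l) -> {set 'I_n}, ordpart_of_type A);
  last first.
  by exfalso; apply: Hnt => A B HA; exfalso; apply: Hno; exists A.
have Hnuq : ~~ uniq l by apply/negP => U; apply: Hnt; exact: uniq_trans U Hhom.
have sz : 2 < size l.
  by rewrite ltnNge; apply: contra Hnuq => sl; apply: small_l.
have [i [j [ij Hlt]]] : exists i j : 'I_(size l), i != j /\ nth 0 l j < nth 0 l i.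
  have [i0 [j0 [Hi Hj Hn]]] := exists_ij Hnu.
  case: (ltngtP (nth 0 l i0) (nth 0 l j0)) => H; last by rewrite H eqxx in Hn.
    exists (Ordinal Hj), (Ordinal Hi); split => //.
    by apply: contraTneq H => [[->]]; rewrite ltnn.
  exists (Ordinal Hi), (Ordinal Hj); split => //.
  by apply: contraTneq H => [[->]]; rewrite ltnn.
have Hij : nth 0 l i != nth 0 l j by rewrite eq_sym (ltn_eqF Hlt).
have [k /andP [ki kj]] := third_pt i j sz.
have ik : i != k by rewrite eq_sym.
have jk : j != k by rewrite eq_sym.
have [Hc _ _] := HA0.
have posj : 0 < nth 0 l j := (all_nthP 0 Hpos) j (ltn_ord j).
have posk : 0 < nth 0 l k := (all_nthP 0 Hpos) k (ltn_ord k).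
have [p1 [p2 [p1i p2i p12]]] : exists p1 p2, [/\ p1 \in A0 i, p2 \in A0 i & p1 != p2].
  by apply/card_gt1P; rewrite Hc; apply: leq_ltn_trans posj Hlt.
have [q qj] : exists q, q \in A0 j by apply/card_gt0P; rewrite Hc.
have [r rk] : exists r, r \in A0 k by apply/card_gt0P; rewrite Hc.
have n3 := n_gt3 HA0 ij ik jk p1i p2i p12 qj rk.
have H2 : two_homogeneous G.
  move=> S T HS HT.
  exact: (homog2 (S0 := S) Hpos Hhom HA0 ij ik jk p1i p2i p12 qj rk Hij HS HT).
split => //; apply: homog_prim => //; exact: ltnW.
Qed.
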